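(* There exists a robust constrained Markov decision process $\mathcal{M}=(\mathcal{S},\mathcal{A},\mathcal{P},\{r_i\}_{i=0}^{I},\{d_i\}_{i=1}^{I},\gamma)$ whose duality gap $$\mathscr{D}=\Big[\max_{\pi}\min_{\lambda\ge 0}\mathcal{L}(\pi,\lambda)\Big]-\Big[\min_{\lambda\ge 0}\max_{\pi}\mathcal{L}(\pi,\lambda)\Big]$$ is strictly positive.
   Context: A robust constrained MDP is a tuple $(\mathcal{S},\mathcal{A},\mathcal{P},\{r_i\}_{i=0}^{I},\{d_i\}_{i=1}^{I},\gamma)$ with finite state space $\mathcal{S}$, finite action space $\mathcal{A}$, an uncertainty set $\mathcal{P}$ of transition kernels $P(\cdot\mid s,a)\in\Delta(\mathcal{S})$, reward functions $r_i:\mathcal{S}\times\mathcal{A}\to\mathbb{R}$ ($r_0$ is the objective reward, $r_1,\dots,r_I$ are constraint rewards), thresholds $d_i\in\mathbb{R}$, discount factor $\gamma\in[0,1)$, and a fixed initial state distribution $\mu$. Policies are stationary randomized maps $\pi:\mathcal{S}\to\Delta(\mathcal{A})$. The robust value of $r_i$ is $V_i^\pi(s)=\inf_{P\in\mathcal{P}}\mathbb{E}_{\pi,P}\big[\sum_{t\ge0}\gamma^t r_i(s_t,a_t)\mid s_0=s\big]$ and $V_i^\pi(\mu)=\mathbb{E}_{s\sim\mu}[V_i^\pi(s)]$. The problem is $\max_\pi V_0^\pi(\mu)$ subject to $V_i^\pi(\mu)\ge d_i$ for $i=1,\dots,I$, with Lagrangian $\mathcal{L}(\pi,\lambda)=V_0^\pi(\mu)-\sum_{i=1}^I\lambda_i\big(d_i-V_i^\pi(\mu)\big)$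 for $\lambda=(\lambda_1,\dots,\lambda_I)\ge0$; the max is over all stationary randomized policies. *)

(* Defs.v *)
From HB Require Import structures.
From mathcomp Require Import all_boot all_order all_algebra.
From mathcomp Require Import all_classical all_reals all_analysis.
From mathcomp Require Import Rstruct.
Set Implicit Arguments. Unset Strict Implicit. Unset Printing Implicit Defensive.
Import Order.TTheory GRing.Theory Num.Theory.
Import numFieldNormedType.Exports.
Local Open Scope classical_set_scope.
Local Open Scope ring_scope.

Section RCMDP.
Variable R : realType.

Definition is_dist (T : finType) (p : T -> R) : Prop :=
  (forall x, 0 <= p x) /\ \sum_(x : T) p x = 1.

Variables (S A : finType).

Definition is_policy (pi : S -> A -> R) : Prop := forall s, is_dist (pi s).

Definition is_kernel (P : S -> A -> S -> R) : Prop := forall s a, is_dist (P s a).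

Definition step (pi : S -> A -> R) (P : S -> A -> S -> R) (f : S -> R) : S -> R :=
  fun s => \sum_(a : A) pi s a * \sum_(s' : S) P s a s' * f s'.

Definition rew_pi (pi : S -> A -> R) (r : S -> A -> R) : S -> R :=
  fun s => \sum_(a : A) pi s a * r s a.

(* E_{pi,P}[ r(s_t,a_t) | s_0 = s ] = (P_pi^t r_pi)(s) *)
Definition exp_reward_t (pi : S -> A -> R) (P : S -> A -> S -> R)
  (r : S -> A -> R) (t : nat) (s : S) : R :=
  iter t (step pi P) (rew_pi pi r) s.

Definition value (gamma : R) (pi : S -> A -> R) (P : S -> A -> S -> R)
  (r : S -> A -> R) (s : S) : R :=
  limn (series (fun t : nat => gamma ^+ t * exp_reward_t pi P r t s)).

Definition robust_value (Pset : set (S -> A -> S -> R)) (gamma : R)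
  (pi : S -> A -> R) (r : S -> A -> R) (s : S) : \bar R :=
  ereal_inf [set (value gamma pi P r s)%:E | P in Pset].

Definition robust_value_mu (Pset : set (S -> A -> S -> R)) (gamma : R)
  (mu : S -> R) (pi : S -> A -> R) (r : S -> A -> R) : \bar R :=
  (\sum_(s : S) (mu s)%:E * robust_value Pset gamma pi r s)%E.

Variable I : nat.

Definition lagrangian (Pset : set (S -> A -> S -> R)) (gamma : R) (mu : S -> R)
  (r0 : S -> A -> R) (r : 'I_I -> S -> A -> R) (d : 'I_I -> R)
  (pi : S -> A -> R) (lam : 'I_I -> R) : \bar R :=
  (robust_value_mu Pset gamma mu pi r0
   - \sum_(i < I) (lam i)%:E * ((d i)%:E - robust_value_mu Pset gamma mu pi (r i)))%E.

Definition policies : set (S -> A -> R) := [set pi | is_policy pi].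
Definition nonneg_multipliers : set ('I_I -> R) := [set lam | forall i, 0 <= lam i].

Definition primal_maxmin Pset gamma mu r0 r d : \bar R :=
  ereal_sup [set ereal_inf [set lagrangian Pset gamma mu r0 r d pi lam
                           | lam in nonneg_multipliers] | pi in policies].

Definition dual_minmax Pset gamma mu r0 r d : \bar R :=
  ereal_inf [set ereal_sup [set lagrangian Pset gamma mu r0 r d pi lam
                           | pi in policies] | lam in nonneg_multipliers].

End RCMDP.

(* Main.v *)
Require Import Defs.
From HB Require Import structures.
From mathcomp Require Import all_boot all_order all_algebra.
From mathcomp Require Import all_classical all_reals all_analysis.
From mathcomp Require Import Rstruct.
From mathcomp Require Import ring lra.
Import Order.TTheory GRing.Theory Num.Theory.
Import numFieldNormedType.Exports.
Local Open Scope classical_set_scope.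
Local Open Scope ring_scope.

Notation RR := Rdefinitions.R.

Definition St := 'I_3.
Definition Pk1 (s : 'I_3) (a : bool) (s' : 'I_3) : RR :=
  if nat_of_ord s == 0%N then (if a then (nat_of_ord s' == 1%N)%:R else (nat_of_ord s' == 2%N)%:R)
  else (nat_of_ord s' == 2%N)%:R.
Definition Pk2 (s : 'I_3) (a : bool) (s' : 'I_3) : RR :=
  if nat_of_ord s == 0%N then (if a then (nat_of_ord s' == 2%N)%:R else (nat_of_ord s' == 1%N)%:R)
  else (nat_of_ord s' == 2%N)%:R.

Lemma iter_step_zero (pi : 'I_3 -> bool -> RR) P t :
  iter t (step pi P) (fun _ => 0) = (fun _ => 0).
Proof.
elim: t => //= t ->; apply: funext => s; rewrite /step.
by apply: big1 => a _; rewrite big1 ?mulr0 // => s' _; rewrite mulr0.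
Qed.

Lemma sum3 (f : 'I_3 -> RR) : \sum_(i < 3) f i = f ord0 + f (lift ord0 ord0) + f (lift ord0 (lift ord0 ord0)).
Proof. by rewrite !big_ord_recl big_ord0 addr0 addrA. Qed.

Lemma sumb (f : bool -> RR) : \sum_(a : bool) f a = f true + f false.
Proof. by rewrite big_bool. Qed.

Lemma value_formula (pi : 'I_3 -> bool -> RR) P (r : 'I_3 -> bool -> RR) (g : RR) :
  (P = Pk1 \/ P = Pk2) ->
  (forall a, r (lift ord0 (lift ord0 ord0)) a = 0) ->
  value g pi P r ord0 = rew_pi pi r ord0 + g * step pi P (rew_pi pi r) ord0.
Proof.
move=> HP Hr.
have Hss : step pi P (step pi P (rew_pi pi r)) = (fun _ => 0).
  apply: funext => s; rewrite /step /rew_pi.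
  case: HP => -> ; rewrite sumb !sum3 /Pk1 /Pk2 /= !sumb !sum3 /= ?Hr;
   case: s => [[|[|[|]]] ?] //=; rewrite ?(mul0r, mulr0, mul1r, addr0, add0r) //.
 all: rewrite ?sumb ?Hr ?(mul0r, mulr0, mul1r, addr0, add0r) //.
have Ht : forall t, exp_reward_t pi P r t.+2 ord0 = 0.
  move=> t; rewrite /exp_reward_t iterSr iterSr Hss iter_step_zero //.
rewrite /value.
apply: norm_lim_near_cst.
exists 2%N => // n /= Hn.
case: n Hn => [|[|n]] // _.
elim: n => [|n IH].
  by rewrite !seriesSr /series /= big_geq // add0r expr0 mul1r expr1.
by rewrite seriesSr IH Ht mulr0 addr0.
Qed.

Definition s1 : 'I_3 := lift ord0 ord0.
Definition r0 (s : 'I_3) (a : bool) : RR := if (nat_of_ord s == 1%N) && ~~ a then 3 else 0.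
Definition r1 (s : 'I_3) (a : bool) : RR :=
  if (nat_of_ord s == 0%N) && ~~ a then -2 else if (nat_of_ord s == 1%N) && ~~ a then -3 else 0.
Definition gam : RR := 1/2.

Lemma V0P1 pi : value gam pi Pk1 r0 ord0 = gam * (pi ord0 true * (pi s1 false * 3)).
Proof.
rewrite value_formula; [|by left|by case].
rewrite /step /rew_pi !sumb !sum3 /Pk1 /r0 /= !sumb /s1 /=; ring.
Qed.
Lemma V0P2 pi : value gam pi Pk2 r0 ord0 = gam * (pi ord0 false * (pi s1 false * 3)).
Proof.
rewrite value_formula; [|by right|by case].
rewrite /step /rew_pi !sumb !sum3 /Pk2 /r0 /= !sumb /s1 /=; ring.
Qed.
Lemma V1P1 pi : value gam pi Pk1 r1 ord0 = pi ord0 false * (-2) + gam * (pi ord0 true * (pi s1 false * (-3))).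
Proof.
rewrite value_formula; [|by left|by case].
rewrite /step /rew_pi !sumb !sum3 /Pk1 /r1 /= !sumb /s1 /=; ring.
Qed.
Lemma V1P2 pi : value gam pi Pk2 r1 ord0 = pi ord0 false * (-2) + gam * (pi ord0 false * (pi s1 false * (-3))).
Proof.
rewrite value_formula; [|by right|by case].
rewrite /step /rew_pi !sumb !sum3 /Pk2 /r1 /= !sumb /s1 /=; ring.
Qed.

Definition Pset : set ('I_3 -> bool -> 'I_3 -> RR) := [set P | P = Pk1 \/ P = Pk2].
Definition mu (s : 'I_3) : RR := (nat_of_ord s == 0%N)%:R.
Definition dd : 'I_1 -> RR := fun _ => -1.
Definition rr : 'I_1 -> 'I_3 -> bool -> RR := fun _ => r1.

Lemma inf2 (v : ('I_3 -> bool -> 'I_3 -> RR) -> RR) :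
  ereal_inf [set (v P)%:E | P in Pset] = (Num.min (v Pk1) (v Pk2))%:E.
Proof.
apply/eqP; rewrite eq_le; apply/andP; split.
  rewrite /Num.min; case: ifP => _; apply: ereal_inf_lbound.
  - by exists Pk1 => //; left.
  - by exists Pk2 => //; right.
apply: le_ereal_inf_tmp => _ [P [->|->] <-]; rewrite lee_fin.
  by rewrite ge_min lexx.
by rewrite ge_min lexx orbT.
Qed.

Lemma lagE pi lam : lagrangian Pset gam mu r0 rr dd pi lam =
  (Num.min (value gam pi Pk1 r0 ord0) (value gam pi Pk2 r0 ord0)
   - lam ord0 * (-1 - Num.min (value gam pi Pk1 r1 ord0) (value gam pi Pk2 r1 ord0)))%:E.
Proof.
rewrite /lagrangian /robust_value_mu big_ord1 /dd /rr.
rewrite !big_ord_recl !big_ord0 /mu /=.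
rewrite !mul0e !mul1e !adde0.
rewrite /robust_value.
rewrite (inf2 (fun P => value gam pi P r0 ord0)) (inf2 (fun P => value gam pi P r1 ord0)).
by rewrite EFinB EFinM EFinB.
Qed.

Definition piA (s : 'I_3) (a : bool) : RR := (a : nat)%:R.
Definition piB (s : 'I_3) (a : bool) : RR := if nat_of_ord s == 0%N then 1/2 else (~~ a : nat)%:R.

Lemma piA_pol : is_policy piA.
Proof.
move=> s; split.
  by move=> a; case: a; rewrite /piA /=; lra.
by rewrite sumb /piA /=; lra.
Qed.

Lemma piB_pol : is_policy piB.
Proof.
move=> s; split.
  move=> a; rewrite /piB; case: ifP => _; first lra.
  by case: a => /=; lra.
rewrite sumb /piB; case: ifP => _ /=; lra.
Qed.

Lemma primal_bound :
  (primal_maxmin Pset gam mu r0 rr dd <= (1/5)%:E)%E.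
Proof.
rewrite /primal_maxmin; apply: ge_ereal_sup => _ [pi Hpi <-].
have [Hp0 Hsum] := Hpi ord0. have [Hw0 Hsum1] := Hpi s1.
rewrite sumb in Hsum. rewrite sumb in Hsum1.
have hp := Hp0 true. have hu := Hp0 false. have hw := Hw0 false. have hw' := Hw0 true.
set p := pi ord0 true in hp Hsum *. set u := pi ord0 false in hu Hsum *.
set w := pi s1 false in hw Hsum1 *.
have hA : Num.min (value gam pi Pk1 r0 ord0) (value gam pi Pk2 r0 ord0) <= gam * (u * (w * 3)).
  by rewrite ge_min V0P2 lexx orbT.
have hB : Num.min (value gam pi Pk1 r1 ord0) (value gam pi Pk2 r1 ord0) <= u * (-2) + gam * (p * (w * (-3))).
  by rewrite ge_min V1P1 lexx.
set mA := Num.min _ _ in hA. set mB := Num.min _ _ in hB.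
set sl := u * (-2) + gam * (p * (w * (-3))) + 1.
case: (lerP 0 sl) => Hs.
- apply: (@le_trans _ _ (lagrangian Pset gam mu r0 rr dd pi (fun _ => 0))).
    by apply: ereal_inf_lbound; exists (fun _ => 0).
  rewrite lagE -/mA -/mB lee_fin mul0r subr0.
  apply: le_trans hA _.
  move: Hs; rewrite /sl /gam => Hs.
  have hpw := mulr_ge0 hp hw.
  clearbody p u w mA mB sl.
  have hu2 : u <= 1/2 by move: Hs hpw; clear; move=> Hs hpw; lra.
  have hw1 : w <= 1 by lra.
  have hp1 : p = 1 - u by lra.
  rewrite hp1 in Hs.
  have Hs' : 0 <= 1 - 2 * u - 3/2 * (1 - u) * w by lra.
  have h1 := mulr_ge0 hu Hs'.
  have h2 := sqr_ge0 (u - 3/10).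
  have : (1 - u) * (1/2 * (u * (w * 3))) <= (1 - u) * (1/5) by lra.
  move=> H; nra.
- set lam0 := gam * (u * (w * 3)) / (- sl).
  have hl0 : 0 <= lam0.
    rewrite /lam0 divr_ge0 //; last lra.
    rewrite /gam; nra.
  apply: (@le_trans _ _ (lagrangian Pset gam mu r0 rr dd pi (fun _ => lam0))).
    by apply: ereal_inf_lbound; exists (fun _ => lam0).
  rewrite lagE -/mA -/mB lee_fin /=.
  have e : lam0 * (- sl) = gam * (u * (w * 3)).
    rewrite /lam0 divfK //; lra.
  have : lam0 * (-1 - (u * (-2) + gam * (p * (w * (-3))))) <= lam0 * (-1 - mB).
    apply: ler_wpM2l => //; lra.
  move: e; rewrite /sl => e H.
  nra.
Qed.

Lemma dual_bound :
  ((3/7)%:E <= dual_minmax Pset gam mu r0 rr dd)%E.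
Proof.
rewrite /dual_minmax; apply: le_ereal_inf_tmp => _ [lam Hlam <-].
have l0 := Hlam ord0.
case: (lerP (3/7) (lam ord0)) => Hl.
- apply: (@le_trans _ _ (lagrangian Pset gam mu r0 rr dd piA lam)); last first.
    by apply: ereal_sup_ubound; exists piA => //; exact: piA_pol.
  have hA : 0 <= Num.min (value gam piA Pk1 r0 ord0) (value gam piA Pk2 r0 ord0).
    rewrite le_min V0P1 V0P2 /piA /gam /=; apply/andP; split; lra.
  have hB : 0 <= Num.min (value gam piA Pk1 r1 ord0) (value gam piA Pk2 r1 ord0).
    rewrite le_min V1P1 V1P2 /piA /gam /=; apply/andP; split; lra.
  rewrite lagE lee_fin; nra.
- apply: (@le_trans _ _ (lagrangian Pset gam mu r0 rr dd piB lam)); last first.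
    by apply: ereal_sup_ubound; exists piB => //; exact: piB_pol.
  have hA : 3/4 <= Num.min (value gam piB Pk1 r0 ord0) (value gam piB Pk2 r0 ord0).
    rewrite le_min V0P1 V0P2 /piB /s1 /gam /=; apply/andP; split; lra.
  have hB : -7/4 <= Num.min (value gam piB Pk1 r1 ord0) (value gam piB Pk2 r1 ord0).
    rewrite le_min V1P1 V1P2 /piB /s1 /gam /=; apply/andP; split; lra.
  rewrite lagE lee_fin; nra.
Qed.

Theorem theorem1 :
  exists (S A : finType) (I : nat) (Pset : set (S -> A -> S -> Rdefinitions.R))
         (r0 : S -> A -> Rdefinitions.R) (r : 'I_I -> S -> A -> Rdefinitions.R)
         (d : 'I_I -> Rdefinitions.R) (gamma : Rdefinitions.R) (mu : S -> Rdefinitions.R),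
    [/\ 0 <= gamma < 1,
        is_dist mu,
        Pset !=set0,
        (forall P, Pset P -> is_kernel P) &
        (primal_maxmin Pset gamma mu r0 r d < dual_minmax Pset gamma mu r0 r d)%E].
Proof.
exists 'I_3, bool, 1%N, Pset, r0, rr, dd, gam, mu.
split.
- by apply/andP; split; rewrite /gam; lra.
- split.
    by move=> s; rewrite /mu; case: (_ == _) => /=; lra.
  by rewrite sum3 /mu /=; lra.
- by exists Pk1; left.
- move=> P [->|->] s a; split.
  + move=> s'; rewrite /Pk1; case: (_ == _); case: a; case: (_ == _) => /=; lra.
  + rewrite sum3 /Pk1; case: s => [[|[|[|]]] ?] //=; case: a => /=; lra.
  + move=> s'; rewrite /Pk2; case: (_ == _); case: a; case: (_ == _) => /=; lra.
  + rewrite sum3 /Pk2; case: s => [[|[|[|]]] ?] //=; case: a => /=; lra.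
- apply: (le_lt_trans primal_bound).
  apply: (lt_le_trans _ dual_bound).
  rewrite lte_fin; lra.
Qed.
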